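(* Let $n\ge 2$ and let $\Delta'$ be the simplicial complex on the vertex set $\{(i,j)\in[n]^2: i\ne j\}$ whose faces are the sets $F$ such that $\prod_{(i,j)\in F}x_{ij}\notin H(2,n)$, where $H(2,n)$ is as described in the context. Order the facets of $\Delta'$ as follows: if $F$ is a facet of $\Delta_R$ and $G$ is a facet of $\Delta_S$, then $F<G$ iff $R<S$ in the order on subsets described in the context, or $R=S$ and $F<G$ in the standard order of paths of the grid $R\times([n]\setminus R)$. Then this total order is a two-way shelling of $\Delta'$ (both it and its reverse are shellings). More precisely, for every facet $F$ of $\Delta'$ that is not the minimal facet, $$\langle F\rangle\cap\langle G: G<F\rangle=\langle F\setminus\{x\}: x\in F^-\rangle,$$ and for every facet $F$ that is not the maximal facet, $$\langle F\rangle\cap\langle G: G>F\rangle=\langle F\setminus\{x\}: x\in F^+\rangle.$$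
   Context: $H(2,n)\subset K[x_{ij}:1\le i,j\le n]$ is the monomial ideal generated by, for all $i<h$ and $j<k$: $x_{ik}x_{hj}$ whenever $i=j$ or $h=k$, and $x_{ij}x_{hk}$ whenever $i\ne j$ and $h\ne k$. For sets $F_1,\dots,F_k$, $\langle F_1,\dots,F_k\rangle$ denotes the smallest simplicial complex containing them. For a nonempty proper subset $R\subset[n]$, $\Delta_R=\{F\in\Delta': F\subseteq R\times([n]\setminus R)\}$. Write $R=\{r_1<\dots<r_p\}$, $[n]\setminus R=\{c_1<\dots<c_{q}\}$ and view $R\times([n]\setminus R)$ as a grid with row $r_1$ on top and column $c_1$ on the left. A path in this grid is a sequence of positions starting at $(r_p,c_1)$ (bottom left) and ending at $(r_1,c_q)$ (top right), each step going either horizontally right ($(r_a,c_b)\to(r_a,c_{b+1})$) or vertically up ($(r_a,c_b)\to(r_{a-1},c_b)$). It is a fact (established in the paper) that the facets of $\Delta_R$ are exactly these paths, and every facet of $\Delta'$ is a facet of $\Delta_R$ for exactly one $R$. Types of points of a path $F$: a point is a left turn if the step into it is horizontal and the step out of it is vertical; a right turn if the step into it is vertical and the step out is horizontal; every other point is the only point of $F$ in its column (type $\bullet$) or the only point of $F$ in its row (type $\circ$) (if both hold, i.e. the grid is $1\times1$, the point is regarded as type $\bullet$). Order on nonempty proper subsets written as increasing sequences: $S=\{a_1<\dots<a_s\}<R=\{b_1<\dots<b_t\}$ iff either $a_j<b_j$ for the smallest $j$ with $a_j\ne b_j$, or $s<t$ and $a_i=b_i$ for $i=1,\dots,s$. Standard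 order of paths in a fixed grid: $F<G$ iff at the first step (going from bottom left to top right) where they differ, the step of $F$ is vertical (and that of $G$ horizontal). For a facet $F$ of $\Delta_R$: $F^-$ consists of the left turns of $F$, the points of type $\bullet$ whose column index is $<\max(R)$, and the points of type $\circ$ whose row index is $\max(R)$; $F^+=F\setminus F^-$. *)

(* Defs.v *)
From HB Require Import structures.
From mathcomp Require Import all_boot all_order all_algebra.
From mathcomp Require Import mpoly.
Set Implicit Arguments.
Unset Strict Implicit.
Unset Printing Implicit Defensive.
Import GRing.Theory.

Section H2n.
Variables (K : fieldType) (n : nat).

(* Positions (i,j) of [n]^2; [n] is encoded 0-based as 'I_n. *)
Definition vertex := ('I_n * 'I_n)%type.

Definition xv (i j : 'I_n) : {mpoly K[n * n]} := 'X_(mxvec_index i j).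

(* Generator of H(2,n) indexed by i<h, j<k. *)
Definition Hgen (i h j k : 'I_n) : {mpoly K[n * n]} :=
  if (i == j) || (h == k) then (xv i k * xv h j)%R else (xv i j * xv h k)%R.

Definition in_H (p : {mpoly K[n * n]}) : Prop :=
  exists c : 'I_n -> 'I_n -> 'I_n -> 'I_n -> {mpoly K[n * n]},
    p = (\sum_(i : 'I_n) \sum_(h : 'I_n | (i < h)%N)
          \sum_(j : 'I_n) \sum_(k : 'I_n | (j < k)%N) c i h j k * Hgen i h j k)%R.

Definition monomial (F : {set vertex}) : {mpoly K[n * n]} :=
  (\prod_(x in F) xv x.1 x.2)%R.

Definition face (F : {set vertex}) : Prop :=
  (forall x, x \in F -> x.1 != x.2) /\ ~ in_H (monomial F).

Definition facet (F : {set vertex}) : Prop :=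
  face F /\ forall G, face G -> F \subset G -> G = F.

Definition properR (R : {set 'I_n}) : bool := (R != set0) && (R != setT).
Definition faceR (R : {set 'I_n}) (F : {set vertex}) : Prop :=
  face F /\ F \subset setX R (~: R).
Definition facetR (R : {set 'I_n}) (F : {set vertex}) : Prop :=
  faceR R F /\ forall G, faceR R G -> F \subset G -> G = F.

(* The grid R x ([n] \ R): rows r_1 < ... < r_p, columns c_1 < ... < c_q. *)
Definition rowsN (R : {set 'I_n}) : seq nat := [seq val i | i <- enum R].
Definition colsN (R : {set 'I_n}) : seq nat := [seq val i | i <- enum (~: R)].

(* A path is encoded by its word of steps from bottom-left to top-right:
   true = vertical (up), false = horizontal (right). *)
Definition valid_word (R : {set 'I_n}) (w : seq bool) : bool :=
  (size w == (size (rowsN R)).-1 + (size (colsN R)).-1) &&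
  (count id w == (size (rowsN R)).-1).

(* The k-th point of the path (k = 0 is (r_p, c_1)), as a pair of nat labels. *)
Definition pt (R : {set 'I_n}) (w : seq bool) (k : nat) : nat * nat :=
  (nth 0 (rowsN R) ((size (rowsN R)).-1 - count id (take k w)),
   nth 0 (colsN R) (count negb (take k w))).

Definition path_set (R : {set 'I_n}) (w : seq bool) : {set vertex} :=
  [set x : vertex | (val x.1, val x.2) \in [seq pt R w k | k <- iota 0 (size w).+1]].

(* standard order of paths: at the first differing step, the smaller one goes up *)
Definition lexlt (w w' : seq bool) : bool :=
  [exists k : 'I_(size w), (take k w == take k w') && nth false w k && ~~ nth false w' k].

Definition pathlt (R : {set 'I_n}) (F G : {set vertex}) : Prop :=
  exists w w', [/\ valid_word R w, valid_word R w', path_set R w = F,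
                   path_set R w' = G & lexlt w w'].

Fixpoint seqlt (s t : seq nat) : bool :=
  match s, t with
  | [::], _ :: _ => true
  | a :: s', b :: t' => (a < b) || ((a == b) && seqlt s' t')
  | _, _ => false
  end.
Definition setlt (S R : {set 'I_n}) : bool := seqlt (rowsN S) (rowsN R).

Definition facet_lt (F G : {set vertex}) : Prop :=
  exists R S, [/\ properR R, properR S, facetR R F, facetR S G &
                  setlt R S \/ (R = S /\ pathlt R F G)].

Definition leftturn (w : seq bool) (k : nat) : bool :=
  [&& 0 < k, k < size w, ~~ nth false w k.-1 & nth false w k].
Definition rightturn (w : seq bool) (k : nat) : bool :=
  [&& 0 < k, k < size w, nth false w k.-1 & ~~ nth false w k].
Definition only_in_col (F : {set vertex}) (x : vertex) : bool :=
  [forall y in F, (y.2 == x.2) ==> (y == x)].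
Definition only_in_row (F : {set vertex}) (x : vertex) : bool :=
  [forall y in F, (y.1 == x.1) ==> (y == x)].
Definition maxR (R : {set 'I_n}) : nat := \max_(i in R) val i.

Definition minus_cond (R : {set 'I_n}) (w : seq bool) (k : nat) (x : vertex) : bool :=
  let F := path_set R w in
  let noturn := ~~ leftturn w k && ~~ rightturn w k in
  let bullet := noturn && only_in_col F x in
  let circ := noturn && ~~ only_in_col F x && only_in_row F x in
  [|| leftturn w k, bullet && (val x.2 < maxR R) | circ && (val x.1 == maxR R)].

Definition Fminus (R : {set 'I_n}) (w : seq bool) : {set vertex} :=
  [set x in path_set R w |
    [exists k : 'I_(size w).+1, (pt R w k == (val x.1, val x.2)) && minus_cond R w k x]].
Definition Fplus (R : {set 'I_n}) (w : seq bool) : {set vertex} :=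
  path_set R w :\: Fminus R w.

(* <F_1, ..., F_k> : the smallest simplicial complex containing the sets in P *)
Definition gen_cx (P : {set vertex} -> Prop) (A : {set vertex}) : Prop :=
  exists2 G, P G & A \subset G.

End H2n.

(* Main.v *)
Require Import Defs.
From HB Require Import structures.
From mathcomp Require Import all_boot all_order all_algebra.
From mathcomp Require Import mpoly zify.
Set Implicit Arguments.
Unset Strict Implicit.
Unset Printing Implicit Defensive.
Import GRing.Theory.

Lemma sum2_single (I : finType) (V : zmodType) (P : I -> I -> bool)
  (f : I -> I -> V) a0 b0 :
  P a0 b0 -> (forall a b, P a b -> ~~ ((a == a0) && (b == b0)) -> f a b = 0%R) ->
  (\sum_a \sum_(b | P a b) f a b = f a0 b0)%R.
Proof.
move=> P0 H. rewrite (bigD1 a0) //= (bigD1 b0) //= big1 ?addr0; last first.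
  by move=> b /andP[Pb nb]; apply: H; rewrite // eqxx.
rewrite big1 ?addr0 // => a na; apply: big1 => b Pb; apply: H => //.
by rewrite (negbTE na).
Qed.

Section Faces.
Variables (K : fieldType) (n : nat).
Local Notation vertex := (vertex n).

Definition chainp (G : {set vertex}) :=
  [forall x in G, forall y in G, (x.1 < y.1)%N ==> (y.2 <= x.2)%N].
Definition disjp (G : {set vertex}) := [forall x in G, forall y in G, x.1 != y.2].
Definition facep G := chainp G && disjp G.

Lemma chainP (G : {set vertex}) : reflect (forall x y, x \in G -> y \in G -> (x.1 < y.1)%N -> (y.2 <= x.2)%N)
  (chainp G).
Proof.
apply: (iffP forall_inP) => [H x y xG yG|H x xG].
  by move/forall_inP: (H x xG) => /(_ y yG) /implyP; apply.
by apply/forall_inP => y yG; apply/implyP; apply: H.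
Qed.

Lemma disjP (G : {set vertex}) : reflect (forall x y, x \in G -> y \in G -> x.1 != y.2) (disjp G).
Proof.
apply: (iffP forall_inP) => [H x y xG yG|H x xG].
  by move/forall_inP: (H x xG) => /(_ y yG).
by apply/forall_inP => y yG; apply: H.
Qed.

Definition idx (x : vertex) := mxvec_index x.1 x.2.
Lemma idx_inj : injective idx.
Proof.
move=> [a b] [c d]; rewrite /idx /mxvec_index /= => /cast_ord_inj /enum_rank_inj.
done.
Qed.

Lemma xvE (x : vertex) : xv K x.1 x.2 = 'X_(idx x).
Proof. by []. Qed.

Lemma monomial_pair (F : {set vertex}) (x y : vertex) : x \in F -> y \in F -> x != y ->
  exists c, monomial K F = (c * (xv K x.1 x.2 * xv K y.1 y.2))%R.
Proof.
move=> xF yF nxy; rewrite /monomial (bigD1 x) //= (bigD1 y) /=; last by rewrite yF eq_sym.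
by eexists; rewrite mulrA [RHS]mulrC.
Qed.

Lemma in_H_pair (F : {set vertex}) (x y : vertex) (i h j k : 'I_n) : x \in F -> y \in F -> x != y ->
  (i < h)%N -> (j < k)%N -> Hgen K i h j k = (xv K x.1 x.2 * xv K y.1 y.2)%R ->
  in_H (monomial K F).
Proof.
move=> xF yF nxy ih jk HE; have [c0 ->] := monomial_pair xF yF nxy.
exists (fun i' h' j' k' => if [&& i' == i, h' == h, j' == j & k' == k] then c0 else 0%R).
rewrite (@sum2_single _ _ (fun a b : 'I_n => (a < b)%N) _ i h) //=; last first.
  move=> a b _ nab; apply: big1 => j' _; apply: big1 => k' _.
  by case: (a == i) (b == h) nab => [] [] //= _; rewrite mul0r.
rewrite (@sum2_single _ _ (fun a b : 'I_n => (a < b)%N) _ j k) //=; last first.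
  move=> a b _ nab; rewrite !eqxx /=.
  by case: (a == j) (b == k) nab => [] [] //= _; rewrite mul0r.
by rewrite !eqxx HE.
Qed.

Lemma face_facep (F : {set vertex}) : face K F -> facep F.
Proof.
move=> [offd nH].
have chainF : chainp F.
  apply/chainP => x y xF yF lt1; rewrite leqNgt; apply/negP => lt2; apply: nH.
  apply: (@in_H_pair F x y x.1 y.1 x.2 y.2) => //.
    by apply/eqP => exy; move: lt1; rewrite exy ltnn.
  by rewrite /Hgen (negbTE (offd _ xF)) (negbTE (offd _ yF)).
rewrite /facep chainF /=; apply/disjP => x y xF yF; apply/negP => /eqP E.
have nx := offd _ xF; have ny := offd _ yF.
case: x xF E nx => a b /=; case: y yF ny => c d /= yF ny xF E nx; subst d.
have nxy : (a, b) != (c, a) by apply/eqP => -[ac _]; rewrite ac eqxx in ny.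
case: (ltngtP a c) => [ac|ca|ac]; last by move/val_inj: ac => ac; rewrite ac eqxx in ny.
- case: (ltngtP b a) => [ba|ab|ba]; last by move/val_inj: ba => ba; rewrite ba eqxx in nx.
  + by move/chainP: chainF => /(_ _ _ xF yF ac) /=; rewrite leqNgt ba.
  + apply: nH; apply: (@in_H_pair F (a,b) (c,a) a c a b) => //.
    by rewrite /Hgen eqxx.
- case: (ltngtP b a) => [ba|ab|ba]; last by move/val_inj: ba => ba; rewrite ba eqxx in nx.
  + apply: nH; apply: (@in_H_pair F (c,a) (a,b) c a b a) => //.
      by rewrite eq_sym.
    by rewrite /Hgen eqxx orbT.
  + by move/chainP: chainF => /(_ _ _ yF xF ca) /=; rewrite leqNgt ab.
Qed.

Lemma facep_face (F : {set vertex}) : facep F -> face K F.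
Proof.
case/andP => /chainP chF /disjP djF; split; first by move=> x xF; apply: djF.
pose v := fun t : 'I_(n * n) => if [exists z in F, idx z == t] then 1%R else 0%R : K.
have vE z : v (idx z) = if z \in F then 1%R else 0%R.
  rewrite /v; case: (boolP (z \in F)) => zF.
    by rewrite (_ : [exists _ in _, _] = true) //; apply/existsP; exists z; rewrite zF eqxx.
  case: existsP => // -[z' /andP[z'F /eqP/idx_inj E]]; by rewrite -E z'F in zF.
have vX (x : vertex) : (xv K x.1 x.2).@[v] = v (idx x) by rewrite xvE mevalXU.
move=> [c HE].
have : (monomial K F).@[v] = 1%R.
  rewrite /monomial (big_morph _ (mevalM v) (meval1 v)).
  by apply: big1 => x xF; rewrite vX vE xF.
rewrite HE (big_morph _ (mevalD v) (meval0 v)) big1 ?(@oner_eq0 K) => [/esym/eqP|i _].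
  by rewrite oner_eq0.
rewrite (big_morph _ (mevalD v) (meval0 v)) big1 // => h ih.
rewrite (big_morph _ (mevalD v) (meval0 v)) big1 // => j _.
rewrite (big_morph _ (mevalD v) (meval0 v)) big1 // => k jk.
rewrite mevalM /Hgen; case: ifP => E.
- rewrite mevalM (vX (i, k)) (vX (h, j)) !vE.
  case f1: ((i, k) \in F); case f2: ((h,j) \in F); rewrite ?mul0r ?mulr0 //.

  case/orP: E => /eqP E.
    by move: (djF _ _ f1 f2); rewrite /= E eqxx.
  by move: (djF _ _ f2 f1); rewrite /= E eqxx.
- rewrite mevalM (vX (i, j)) (vX (h, k)) !vE.
  case f1: ((i, j) \in F); case f2: ((h,k) \in F); rewrite ?mul0r ?mulr0 //.
  by move: (chF _ _ f1 f2 ih) => /=; rewrite leqNgt jk.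
Qed.

Lemma faceP (F : {set vertex}) : face K F <-> facep F.
Proof. by split; [apply: face_facep | apply: facep_face]. Qed.

End Faces.

Section Facets.
Variables (K : fieldType) (n : nat).
Local Notation vertex := (vertex n).

Lemma facep_sub (G H : {set vertex}) : facep G -> H \subset G -> facep H.
Proof.
case/andP=> /chainP cG /disjP dG /subsetP HG; apply/andP; split.
  by apply/chainP => x y /HG xG /HG yG; apply: cG.
by apply/disjP => x y /HG xG /HG yG; apply: dG.
Qed.

Lemma facetP (G : {set vertex}) :
  facet K G <-> facep G /\ (forall G', facep G' -> G \subset G' -> G' = G).
Proof.
split=> [[/faceP fG mG]|[fG mG]]; split; first by [].
- by move=> G' /(faceP K) fG'; apply: mG.
- by apply/faceP.
- by move=> G' /faceP fG'; apply: mG.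
Qed.

Lemma ex_facet (H : {set vertex}) : facep H -> exists G, facet K G /\ H \subset G.
Proof.
move=> fH.
have Hok : facep H && (H \subset H) by rewrite fH subxx.
have [G /andP[fG HG] Gmax] := @arg_maxnP _ H
  (fun G : {set vertex} => facep G && (H \subset G)) (fun G => #|G|) Hok.
exists G; split=> //; apply/facetP; split=> // G' fG' GG'.
have cG : #|G'| <= #|G| by apply: Gmax; rewrite fG' (subset_trans HG GG').
by apply/esym/eqP; rewrite eqEcard GG' cG.
Qed.

Definition rowsof (G : {set vertex}) : {set 'I_n} := [set i | [exists j, (i, j) \in G]].

Lemma rowsofP (G : {set vertex}) i : reflect (exists j, (i, j) \in G) (i \in rowsof G).
Proof. by rewrite inE; apply: existsP. Qed.

Lemma facet_rows (G : {set vertex}) x : facet K G -> x \in G ->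
  properR (rowsof G) /\ facetR K (rowsof G) G.
Proof.
move=> fG xG; have [fpG' mG'] := (facetP G).1 fG.
case/andP: (fpG') => _ /disjP dG.
have sub : G \subset setX (rowsof G) (~: rowsof G).
  apply/subsetP => -[a b] abG; rewrite !inE /=; apply/andP; split.
    by apply/existsP; exists b.
  apply/negP => /existsP [j bjG]; by move: (dG _ _ bjG abG); rewrite eqxx.
split.
  apply/andP; split; apply/negP => /eqP E.
    by move: (sub); case: x xG => a b xG /subsetP /(_ _ xG); rewrite E !inE.
  by move: (sub); case: x xG => a b xG /subsetP /(_ _ xG); rewrite E !inE.
split; first by split; [exact: fG.1 | exact: sub].
by move=> G' [fG' _] GG'; apply: (fG).2.
Qed.

Lemma rows_determined (H G : {set vertex}) (T : {set 'I_n}) :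
  facep G -> H \subset G ->
  (forall i, i \in T -> exists j, (i, j) \in H) ->
  (forall i, i \notin T -> exists j, (j, i) \in H) -> rowsof G = T.
Proof.
case/andP => _ /disjP dG /subsetP HG h1 h2; apply/setP => i.
case: (boolP (i \in T)) => iT.
  by have [j /HG ijG] := h1 _ iT; apply/rowsofP; exists j.
have [j /HG jiG] := h2 _ iT; apply/negP => /rowsofP [j' ij'G].
by move: (dG _ _ ij'G jiG); rewrite eqxx.
Qed.

Lemma ext_row (Fc : {set vertex}) (t : 'I_n) x0 : facep Fc -> x0 \in Fc ->
  (forall z, z \in Fc -> z.1 != t) -> (forall z, z \in Fc -> z.2 != t) ->
  exists d, facep ((t, d) |: Fc).
Proof.
case/andP=> /chainP cF /disjP dF x0F h1 h2.
have mk : forall d : 'I_n, (forall z, z \in Fc -> (z.1 < t)%N -> (d <= z.2)%N) ->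
    (forall z, z \in Fc -> (t < z.1)%N -> (z.2 <= d)%N) ->
    (exists z, (z \in Fc) && (z.2 == d)) -> facep ((t, d) |: Fc).
  move=> d hA hB [z0 /andP[z0F /eqP z0d]]; apply/andP; split.
    apply/chainP => x y; rewrite !inE => /predU1P[->|xF] /predU1P[->|yF] //=.
    + by move=> ty; apply: hB.
    + by move=> xt; apply: hA.
    + by apply: cF.
  apply/disjP => x y; rewrite !inE => /predU1P[->|xF] /predU1P[->|yF] /=.
  + by rewrite -z0d eq_sym h2.
  + by rewrite eq_sym h2.
  + by rewrite -z0d dF.
  + by apply: dF.
case: (boolP [exists z in Fc, (z.1 < t)%N]) => [/existsP[z1 /andP[z1F z1t]]|noA].
  have Hok : (z1 \in Fc) && (z1.1 < t)%N by rewrite z1F.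
  have [a /andP[aF at0] amin] := @arg_minnP _ z1
    (fun z : vertex => (z \in Fc) && (z.1 < t)%N) (fun z => val z.2) Hok.
  exists a.2; apply: mk.
  - by move=> z zF zt; apply: amin; rewrite zF.
  - by move=> z zF tz; apply: cF => //; apply: ltn_trans tz.
  - by exists a; rewrite aF eqxx.
have Hok : (x0 \in Fc) && (t < x0.1)%N.
  rewrite x0F /= ltn_neqAle eq_sym h1 //=; rewrite leqNgt;
  apply/negP => x0t; case/existsP: noA; exists x0; by rewrite x0F.
have [b /andP[bF tb] bmax] := @arg_maxnP _ x0
  (fun z : vertex => (z \in Fc) && (t < z.1)%N) (fun z => val z.2) Hok.
exists b.2; apply: mk.
- by move=> z zF zt; case/existsP: noA; exists z; rewrite zF.
- by move=> z zF tz; apply: bmax; rewrite zF.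
- by exists b; rewrite bF eqxx.
Qed.

Lemma ext_col (Fc : {set vertex}) (t : 'I_n) x0 : facep Fc -> x0 \in Fc ->
  (forall z, z \in Fc -> z.1 != t) -> (forall z, z \in Fc -> z.2 != t) ->
  exists d, facep ((d, t) |: Fc).
Proof.
case/andP=> /chainP cF /disjP dF x0F h1 h2.
have mk : forall d : 'I_n, (forall z, z \in Fc -> (z.2 < t)%N -> (d <= z.1)%N) ->
    (forall z, z \in Fc -> (t < z.2)%N -> (z.1 <= d)%N) ->
    (exists z, (z \in Fc) && (z.1 == d)) -> facep ((d, t) |: Fc).
  move=> d hA hB [z0 /andP[z0F /eqP z0d]]; apply/andP; split.
    apply/chainP => x y; rewrite !inE => /predU1P[->|xF] /predU1P[->|yF] //=.
    + move=> dy; rewrite leqNgt; apply/negP => yt.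
      by move: (hB _ yF yt); rewrite leqNgt dy.
    + move=> xd; rewrite leqNgt; apply/negP => tx.
      by move: (hA _ xF tx); rewrite leqNgt xd.
    + by apply: cF.
  apply/disjP => x y; rewrite !inE => /predU1P[->|xF] /predU1P[->|yF] /=.
  + by rewrite -z0d h1.
  + by rewrite -z0d dF.
  + by rewrite h1.
  + by apply: dF.
case: (boolP [exists z in Fc, (t < z.2)%N]) => [/existsP[z1 /andP[z1F z1t]]|noB].
  have Hok : (z1 \in Fc) && (t < z1.2)%N by rewrite z1F.
  have [b /andP[bF tb] bmax] := @arg_maxnP _ z1
    (fun z : vertex => (z \in Fc) && (t < z.2)%N) (fun z => val z.1) Hok.
  exists b.1; apply: mk.
  - move=> z zF zt; rewrite leqNgt; apply/negP => zb.
    by move: (cF _ _ zF bF zb); rewrite leqNgt (ltn_trans zt tb).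
  - by move=> z zF tz; apply: bmax; rewrite zF.
  - by exists b; rewrite bF eqxx.
have Hok : (x0 \in Fc) && (x0.2 < t)%N.
  rewrite x0F /= ltn_neqAle h2 //=; rewrite leqNgt;
  apply/negP => x0t; case/existsP: noB; exists x0; by rewrite x0F.
have [a /andP[aF at0] amin] := @arg_minnP _ x0
  (fun z : vertex => (z \in Fc) && (z.2 < t)%N) (fun z => val z.1) Hok.
exists a.1; apply: mk.
- by move=> z zF zt; apply: amin; rewrite zF.
- by move=> z zF tz; case/existsP: noB; exists z; rewrite zF.
- by exists a; rewrite aF eqxx.
Qed.

End Facets.

Lemma fcons (T : Type) (p : pred T) x s : filter p (x :: s) = if p x then x :: filter p s else filter p s.
Proof. by []. Qed.

Lemma seqlt_consL (x : nat) X Y : (forall b, b \in Y -> x < b) ->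
  seqlt (x :: X) Y = (Y != [::]).
Proof. by case: Y => [|b Y] //= H; rewrite H ?inE ?eqxx. Qed.

Lemma seqlt_consR (x : nat) X Y : (forall b, b \in X -> x < b) ->
  seqlt X (x :: Y) = (X == [::]).
Proof.
case: X => [|b X] //= H; have := H b; rewrite inE eqxx => /(_ isT) xb.
by rewrite ltnNge (ltnW xb) /= (gtn_eqF xb).
Qed.

Lemma seqlt_char (T : eqType) (f : T -> nat) (s : seq T) (P Q : pred T) :
  sorted (fun a b => f a < f b) s ->
  seqlt [seq f x | x <- s & P x] [seq f x | x <- s & Q x] <->
  exists2 i, i \in s & (forall j, j \in s -> f j < f i -> P j = Q j) /\
    ((P i /\ ~~ Q i /\ exists2 j, j \in s & (f i < f j) && Q j) \/
     (Q i /\ ~~ P i /\ forall j, j \in s -> f i < f j -> ~~ P j)).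
Proof.
have tr : transitive (fun a b : T => f a < f b) by move=> ???; apply: ltn_trans.
elim: s => [|a s IH] srt.
  by split => [//|[i]]; rewrite in_nil.
have srt' := path_sorted srt.
have /allP amin := order_path_min tr srt.
have IH' := IH srt'.
have bigger (R : pred T) b : b \in [seq f x | x <- s & R x] -> f a < b.
  by case/mapP => x; rewrite mem_filter => /andP[_ xs] ->; apply: amin.
have notlt j : j \in a :: s -> f j < f a -> False.
  rewrite inE => /predU1P[->|js]; first by rewrite ltnn.
  by move: (amin j js); rewrite /= => h1 h2; move: (ltn_trans h1 h2); rewrite ltnn.
case Pa: (P a); case Qa: (Q a); rewrite !fcons Pa Qa ?map_cons.
- rewrite [seqlt _ _]/= ltnn eqxx /=; split.
  + case/IH' => i is_ [agr disj]; exists i; first by rewrite inE is_ orbT.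
    split.
      move=> j; rewrite inE => /predU1P[->|js]; first by rewrite Pa Qa.
      by apply: agr.
    case: disj => [[Pi [Qi [j js fij]]]|[Qi [Pi H]]].
      by left; split=> //; split=> //; exists j; rewrite // inE js orbT.
    right; split=> //; split=> // j; rewrite inE => /predU1P[->|js].
      by move: (amin i is_) => /= h1 h2; move: (ltn_trans h1 h2); rewrite ltnn.
    by apply: H.
  + case=> i; rewrite inE => /predU1P[->|is_] [agr disj].
      by case: disj => [[_ [/negP]]|[_ [/negP]]].
    apply/IH'; exists i => //; split.
      by move=> j js; apply: agr; rewrite inE js orbT.
    case: disj => [[Pi [Qi [j js fij]]]|[Qi [Pi H]]].
      left; split=> //; split=> //; exists j => //.
      move: js; rewrite inE => /predU1P[ja|//]; subst j.
      case/andP: fij => fij _; move: (amin i is_) => /= h.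
      by move: (ltn_trans h fij); rewrite ltnn.
    right; split=> //; split=> // j js; apply: H; by rewrite inE js orbT.
- rewrite seqlt_consL; last exact: bigger.
  split.
  + move=> Yne; have [j js Qj] : exists2 j, j \in s & Q j.
      apply/hasP; rewrite has_filter; apply: contraNneq Yne => ->; done.
    exists a; first by rewrite mem_head.
    split; first by move=> j' j's /(notlt j' j's).
    left; split=> //; split; first by rewrite Qa.
    by exists j; rewrite ?inE ?js ?orbT ?amin.
  + case=> i; rewrite inE => /predU1P[->|is_] [agr disj].
      case: disj => [[_ [_ [j js /andP[fj Qj]]]]|[Qi _]]; last by rewrite Qa in Qi.
      move: js; rewrite inE => /predU1P[ja|js]; first by subst; rewrite ltnn in fj.
      apply/eqP => Y0; have : f j \in [seq f x | x <- s & Q x].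
        by apply/mapP; exists j; rewrite // mem_filter Qj js.
      by rewrite Y0.
    by move: (agr a (mem_head _ _) (amin i is_)); rewrite Pa Qa.
- rewrite seqlt_consR; last exact: bigger.
  split.
  + move=> /eqP X0; exists a; first by rewrite mem_head.
    split; first by move=> j' j's /(notlt j' j's).
    right; split; first by rewrite Qa.
    split; first by rewrite Pa.
    move=> j; rewrite inE => /predU1P[->|js]; first by rewrite ltnn.
    move=> _; apply/negP => Pj; have : f j \in [seq f x | x <- s & P x].
      by apply/mapP; exists j; rewrite // mem_filter Pj js.
    by rewrite X0.
  + case=> i; rewrite inE => /predU1P[->|is_] [agr disj].
      case: disj => [[Pi _]|[_ [_ H]]]; first by rewrite Pa in Pi.
      case E: [seq x <- s | P x] => [//|y ys].
      have : y \in [seq x <- s | P x] by rewrite E mem_head.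
      rewrite mem_filter => /andP[Py ys'].
      by move: (H y (mem_behead (s:=a::s) ys') (amin y ys')); rewrite Py.
    by move: (agr a (mem_head _ _) (amin i is_)); rewrite Pa Qa.
- split.
  + case/IH' => i is_ [agr disj]; exists i; first by rewrite inE is_ orbT.
    split.
      move=> j; rewrite inE => /predU1P[->|js]; first by rewrite Pa Qa.
      by apply: agr.
    case: disj => [[Pi [Qi [j js fij]]]|[Qi [Pi H]]].
      by left; split=> //; split=> //; exists j; rewrite // inE js orbT.
    right; split=> //; split=> // j; rewrite inE => /predU1P[->|js].
      by move: (amin i is_) => /= h1 h2; move: (ltn_trans h1 h2); rewrite ltnn.
    by apply: H.
  + case=> i; rewrite inE => /predU1P[->|is_] [agr disj].
      by case: disj => [[H _]|[H _]]; move: H; rewrite ?Pa ?Qa.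
    apply/IH'; exists i => //; split.
      by move=> j js; apply: agr; rewrite inE js orbT.
    case: disj => [[Pi [Qi [j js fij]]]|[Qi [Pi H]]].
      left; split=> //; split=> //; exists j => //.
      move: js; rewrite inE => /predU1P[ja|//]; subst j.
      case/andP: fij => fij _; move: (amin i is_) => /= h.
      by move: (ltn_trans h fij); rewrite ltnn.
    right; split=> //; split=> // j js; apply: H; by rewrite inE js orbT.
Qed.

Section SetLt.
Variable n : nat.

Lemma rowsN_filter (S : {set 'I_n}) : rowsN S = [seq val x | x <- enum 'I_n & x \in S].
Proof.
rewrite /rowsN -deprecated_filter_index_enum.
by have -> : index_enum 'I_n = enum 'I_n by rewrite enumT.
Qed.

Lemma sorted_ord : sorted (fun a b : 'I_n => val a < val b) (enum 'I_n).
Proof. by have := iota_ltn_sorted 0 n; rewrite -val_enum_ord sorted_map. Qed.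

Lemma setlt_char (S R : {set 'I_n}) : setlt S R <->
  exists m : 'I_n, (forall j : 'I_n, j < m -> (j \in S) = (j \in R)) /\
   ((m \in S /\ m \notin R /\ exists j : 'I_n, (m < j) && (j \in R)) \/
    (m \in R /\ m \notin S /\ forall j : 'I_n, m < j -> j \notin S)).
Proof.
rewrite /setlt !rowsN_filter (@seqlt_char _ val _ (fun x => x \in S) (fun x => x \in R) sorted_ord); split.
  case=> m _ [agr disj]; exists m; split; first by move=> j; apply: agr; rewrite mem_enum.
  case: disj => [[h1 [h2 [j _ h3]]]|[h1 [h2 h3]]]; [left|right]; do 2!split=> //.
    by exists j.
  by move=> j; apply: h3; rewrite mem_enum.
case=> m [agr disj]; exists m; first by rewrite mem_enum.
split; first by move=> j _; apply: agr.
case: disj => [[h1 [h2 [j h3]]]|[h1 [h2 h3]]]; [left|right]; do 2!split=> //.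
  by exists j; rewrite ?mem_enum.
by move=> j _; apply: h3.
Qed.

End SetLt.

Lemma ivt (f : nat -> nat) N v : f 0 = 0 -> (forall k, k < N -> f k.+1 <= (f k).+1) ->
  v <= f N -> exists2 k, k <= N & f k = v.
Proof.
move=> f0 st; elim: N st => [|N IH] st vN.
  by exists 0 => //; move: vN; rewrite f0; case: v.
case: (leqP v (f N)) => vfN.
  by have [k kN fk] := IH (fun k kN => st k (ltnW kN)) vfN; exists k => //; apply: leqW.
exists N.+1 => //; have := st N (ltnSn N); lia.
Qed.

Definition Uc (s : seq bool) k := count id (take k s).
Definition Hc (s : seq bool) k := count negb (take k s).

Lemma UH s k : Uc s k + Hc s k = minn k (size s).
Proof.
rewrite /Uc /Hc (count_predC id) size_take; case: ltnP => h; lia.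
Qed.

Lemma Uc0 s : Uc s 0 = 0. Proof. by rewrite /Uc take0. Qed.
Lemma Hc0 s : Hc s 0 = 0. Proof. by rewrite /Hc take0. Qed.

Lemma count_take_mono (a : pred bool) s k k' : k <= k' ->
  count a (take k s) <= count a (take k' s).
Proof.
move=> kk; rewrite -(subnKC kk) takeD count_cat; apply: leq_addr.
Qed.

Lemma Uc_mono s k k' : k <= k' -> Uc s k <= Uc s k'.
Proof. exact: count_take_mono. Qed.
Lemma Hc_mono s k k' : k <= k' -> Hc s k <= Hc s k'.
Proof. exact: count_take_mono. Qed.

Lemma Uc_S s k : k < size s -> Uc s k.+1 = Uc s k + nth false s k.
Proof. by move=> ks; rewrite /Uc (take_nth false ks) -cats1 count_cat /= addn0. Qed.
Lemma Hc_S s k : k < size s -> Hc s k.+1 = Hc s k + ~~ nth false s k.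
Proof. by move=> ks; rewrite /Hc (take_nth false ks) -cats1 count_cat /= addn0. Qed.

Lemma Uc_size s k : size s <= k -> Uc s k = count id s.
Proof. by move=> h; rewrite /Uc take_oversize. Qed.
Lemma Hc_size s k : size s <= k -> Hc s k = count negb s.
Proof. by move=> h; rewrite /Hc take_oversize. Qed.

Ltac clia := repeat match goal with H : context [#|_|] |- _ => revert H end;
  repeat match goal with |- context [#|?A|] => let P := fresh "P" in move: (#|A|) => P end;
  intros; lia.

Section Paths.
Variables (K : fieldType) (n' : nat).
Local Notation n := n'.+1.
Local Notation vertex := (vertex n).
Variable R : {set 'I_n}.
Hypothesis pR : properR R.

Local Notation p := #|R|.
Local Notation q := #|~: R|.

Definition rowO a := nth ord0 (enum R) a.
Definition colO b := nth ord0 (enum (~: R)) b.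
Definition ptv (s : seq bool) k : vertex := (rowO (p.-1 - Uc s k), colO (Hc s k)).

Lemma p_gt0 : 0 < p.
Proof.
case/andP: pR => /set0Pn [x xR] _; apply/card_gt0P; by exists x.
Qed.
Lemma q_gt0 : 0 < q.
Proof.
case/andP: pR => _ nT; apply/card_gt0P.
have [x xR] : exists x, x \notin R.
  apply/existsP; apply: contraR nT; rewrite negb_exists => /forallP H.
  by apply/eqP/setP => x; rewrite inE; move: (H x); rewrite negbK.
by exists x; rewrite inE.
Qed.

Lemma size_rowsN : size (rowsN R) = p. Proof. by rewrite size_map cardE. Qed.
Lemma size_colsN : size (colsN R) = q. Proof. by rewrite size_map cardE. Qed.

Lemma sorted_enumS (S : {set 'I_n}) : sorted ltn (map val (enum S)).
Proof.
rewrite -deprecated_filter_index_enum sorted_map.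
apply: sorted_filter; first by move=> ???; apply: ltn_trans.
rewrite -sorted_map.
have -> : index_enum 'I_n = enum 'I_n by rewrite enumT.
rewrite val_enum_ord. exact: iota_ltn_sorted.
Qed.

Lemma nthS_lt (S : {set 'I_n}) a b : a < b -> b < #|S| ->
  val (nth ord0 (enum S) a) < val (nth ord0 (enum S) b).
Proof.
move=> ab bS; have aS := ltn_trans ab bS.
rewrite -!(nth_map ord0 0 val) -?cardE //.
apply: (sorted_ltn_nth ltn_trans) => //; first exact: sorted_enumS.
  by rewrite inE size_map -cardE.
by rewrite inE size_map -cardE.
Qed.

Lemma nthS_ltE (S : {set 'I_n}) a b : a < #|S| -> b < #|S| ->
  (val (nth ord0 (enum S) a) < val (nth ord0 (enum S) b)) = (a < b).
Proof.
move=> aS bS; case: (ltngtP a b) => [ab|ba|->]; first by rewrite nthS_lt.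
  by apply/negbTE; rewrite -leqNgt ltnW // nthS_lt.
by rewrite ltnn.
Qed.

Lemma nthS_inj (S : {set 'I_n}) a b : a < #|S| -> b < #|S| ->
  nth ord0 (enum S) a = nth ord0 (enum S) b -> a = b.
Proof.
move=> aS bS E; case: (ltngtP a b) => // h.
  by move: (nthS_lt h bS); rewrite E ltnn.
by move: (nthS_lt h aS); rewrite E ltnn.
Qed.

Lemma nthS_in (S : {set 'I_n}) a : a < #|S| -> nth ord0 (enum S) a \in S.
Proof. by move=> aS; rewrite -mem_enum mem_nth // -cardE. Qed.

Lemma nthS_index (S : {set 'I_n}) r : r \in S -> exists2 a, a < #|S| & r = nth ord0 (enum S) a.
Proof.
move=> rS; exists (index r (enum S)); first by rewrite cardE index_mem mem_enum.
by rewrite nth_index // mem_enum.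
Qed.

Section Word.
Variable w : seq bool.
Hypothesis vw : valid_word R w.

Lemma size_w : size w = p.-1 + q.-1.
Proof. by case/andP: vw; rewrite size_rowsN size_colsN => /eqP. Qed.
Lemma count_w : count id w = p.-1.
Proof. by case/andP: vw; rewrite size_rowsN => _ /eqP. Qed.
Lemma countN_w : count negb w = q.-1.
Proof.
have h := count_predC id w; rewrite count_w size_w in h.
have -> : count negb w = count (predC id) w by apply: eq_count.
lia.
Qed.

Lemma Uc_le k : Uc w k <= p.-1.
Proof. rewrite -count_w /Uc; case: (leqP k (size w)) => h; last by rewrite take_oversize // ltnW.
by rewrite -{2}(take_size w); apply: count_take_mono. Qed.
Lemma Hc_le k : Hc w k <= q.-1.
Proof. rewrite -countN_w /Hc; case: (leqP k (size w)) => h; last by rewrite take_oversize // ltnW.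
by rewrite -{2}(take_size w); apply: count_take_mono. Qed.
Lemma Uc_end : Uc w (size w) = p.-1.
Proof. by rewrite -count_w Uc_size. Qed.
Lemma Hc_end : Hc w (size w) = q.-1.
Proof. by rewrite -countN_w Hc_size. Qed.

Lemma row_idx_lt k : p.-1 - Uc w k < p.
Proof. have := p_gt0; lia. Qed.
Lemma col_idx_lt k : Hc w k < q.
Proof. have := q_gt0; have := Hc_le k; lia. Qed.

Lemma pt_ptv k : pt R w k = (val (ptv w k).1, val (ptv w k).2).
Proof.
rewrite /pt size_rowsN /rowsN /colsN /ptv /rowO /colO.
rewrite !(nth_map ord0) //; rewrite -cardE.
  exact: col_idx_lt.
exact: row_idx_lt.
Qed.

Lemma vert_eq (x y : vertex) : (val x.1, val x.2) = (val y.1, val y.2) -> x = y.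
Proof. by case: x y => [a b] [c d] /= [/val_inj -> /val_inj ->]. Qed.

Lemma in_path x : x \in path_set R w <-> exists2 k, k <= size w & x = ptv w k.
Proof.
rewrite /path_set inE; split.
  case/mapP => k; rewrite mem_iota add0n ltnS => kw; rewrite pt_ptv => /vert_eq ->.
  by exists k.
case=> k kw ->; apply/mapP; exists k; last by rewrite pt_ptv.
by rewrite mem_iota add0n ltnS.
Qed.

Lemma ptv_in k : k <= size w -> ptv w k \in path_set R w.
Proof. by move=> kw; apply/in_path; exists k. Qed.

Lemma ptv1_in k : (ptv w k).1 \in R.
Proof. by apply: nthS_in; apply: row_idx_lt. Qed.
Lemma ptv2_notin k : (ptv w k).2 \notin R.
Proof.
have := nthS_in (col_idx_lt k); rewrite inE; done.
Qed.

Lemma ptv1_ltE k k' : (val (ptv w k).1 < val (ptv w k').1) = (Uc w k' < Uc w k).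
Proof.
rewrite /ptv /= /rowO nthS_ltE; try exact: row_idx_lt.
have h1 := Uc_le k; have h2 := Uc_le k'; have h3 := p_gt0.
set P := #|R| in h1 h2 h3 *; set a := Uc w k in h1 *; set b := Uc w k' in h2 *.
apply/idP/idP => ?; lia.
Qed.

Lemma ptv1_eqE k k' : ((ptv w k).1 == (ptv w k').1) = (Uc w k == Uc w k').
Proof.
apply/eqP/eqP => [E|E]; last by rewrite /ptv /= E.
have := nthS_inj (row_idx_lt k) (row_idx_lt k') E.
have := Uc_le k; have := Uc_le k'; lia.
Qed.

Lemma ptv2_ltE k k' : (val (ptv w k).2 < val (ptv w k').2) = (Hc w k < Hc w k').
Proof. by rewrite /ptv /= /colO nthS_ltE //; apply: col_idx_lt. Qed.

Lemma ptv2_eqE k k' : ((ptv w k).2 == (ptv w k').2) = (Hc w k == Hc w k').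
Proof.
apply/eqP/eqP => [E|E]; last by rewrite /ptv /= E.
exact: nthS_inj (col_idx_lt k) (col_idx_lt k') E.
Qed.

Lemma ptv_inj k k' : k <= size w -> k' <= size w -> ptv w k = ptv w k' -> k = k'.
Proof.
move=> kw k'w E; have /eqP E1 : Uc w k == Uc w k' by rewrite -ptv1_eqE E.
have /eqP E2 : Hc w k == Hc w k' by rewrite -ptv2_eqE E.
have := UH w k; have := UH w k'; rewrite E1 E2; lia.
Qed.

Lemma UcS_le k : Uc w k.+1 <= (Uc w k).+1.
Proof.
case: (ltnP k (size w)) => h; first by rewrite Uc_S //; case: nth; rewrite ?addn1 ?addn0.
by rewrite !Uc_size // ltnW.
Qed.
Lemma HcS_le k : Hc w k.+1 <= (Hc w k).+1.
Proof.
case: (ltnP k (size w)) => h; first by rewrite Hc_S //; case: nth; rewrite ?addn1 ?addn0.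
by rewrite !Hc_size // ltnW.
Qed.

Lemma cover_row r : r \in R -> exists2 k, k <= size w & (ptv w k).1 = r.
Proof.
move=> /nthS_index [a ap ->].
have hv : p.-1 - a <= Uc w (size w) by rewrite Uc_end leq_subr.
have [k kw Uk] := @ivt (Uc w) (size w) (p.-1 - a) (Uc0 w) (fun k _ => UcS_le k) hv.
exists k => //; rewrite /ptv /= Uk /rowO; congr nth; move: ap; move: (#|R|) => P; lia.
Qed.

Lemma cover_col c : c \notin R -> exists2 k, k <= size w & (ptv w k).2 = c.
Proof.
move=> cR; have cR' : c \in ~: R by rewrite inE.
have [b bq ->] := nthS_index cR'.
have hv : b <= Hc w (size w) by rewrite Hc_end; lia.
have [k kw Hk] := @ivt (Hc w) (size w) b (Hc0 w) (fun k _ => HcS_le k) hv.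
by exists k => //; rewrite /ptv /= Hk.
Qed.

Lemma path_facep : facep (path_set R w).
Proof.
apply/andP; split.
  apply/chainP => x y /in_path [k kw ->] /in_path [k' k'w ->].
  rewrite ptv1_ltE => lt1; rewrite leqNgt ptv2_ltE; apply/negP => lt2.
  have : k' < k by case: (ltnP k' k) => // h; move: (Uc_mono w h); lia.
  move/ltnW/(Hc_mono w); lia.
apply/disjP => x y /in_path [k kw ->] /in_path [k' k'w ->].
apply/eqP => E; have := ptv2_notin k'; by rewrite -E ptv1_in.
Qed.

Lemma path_max (G : {set vertex}) : facep G -> path_set R w \subset G -> G = path_set R w.
Proof.
case/andP => /chainP cG /disjP dG /subsetP PG.
apply/eqP; rewrite eqEsubset; apply/andP; split; last by apply/subsetP.
apply/subsetP => y yG.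
have y1R : y.1 \in R.
  apply: contraT => y1R; have [k kw E] := cover_col y1R.
  by move: (dG _ _ yG (PG _ (ptv_in kw))); rewrite E eqxx.
have y2R : y.2 \notin R.
  apply/negP => y2R; have [k kw E] := cover_row y2R.
  by move: (dG _ _ (PG _ (ptv_in kw)) yG); rewrite E eqxx.
have [a ap ya] := nthS_index y1R.
have y2R' : y.2 \in ~: R by rewrite inE.
have [b bq yb] := nthS_index y2R'.
move U0def : (p.-1 - a) => U0.
have kk : U0 + b <= size w by rewrite size_w; have := p_gt0; have := q_gt0; lia.
have hs := UH w (U0 + b); rewrite (minn_idPl kk) in hs.
have zin := PG _ (ptv_in kk).
case: (ltngtP (Uc w (U0 + b)) U0) => hU.
-
  have h1 : val y.1 < val (ptv w (U0 + b)).1.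
    rewrite ya /ptv /= /rowO nthS_ltE //; first clia. exact: row_idx_lt.
  have h2 : val y.2 < val (ptv w (U0 + b)).2.
    rewrite yb /ptv /= /colO nthS_ltE //; first clia. exact: col_idx_lt.
  by move: (cG _ _ yG zin h1); rewrite leqNgt h2.
- have h1 : val (ptv w (U0 + b)).1 < val y.1.
    have := Uc_le (U0 + b); rewrite ya /ptv /= /rowO nthS_ltE //; first clia. exact: row_idx_lt.
  have h2 : val (ptv w (U0 + b)).2 < val y.2.
    rewrite yb /ptv /= /colO nthS_ltE //; first clia. exact: col_idx_lt.
  by move: (cG _ _ zin yG h1); rewrite leqNgt h2.
- apply/in_path; exists (U0 + b) => //.
  case: y ya yb {yG y1R y2R y2R'} => y1 y2 /= -> ->; rewrite /ptv /rowO /colO hU.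
  by congr (nth _ _ _, nth _ _ _); lia.
Qed.

Lemma path_facet : facet K (path_set R w).
Proof.
apply/facetP; split; first exact: path_facep.
by move=> G' fG' sG'; apply: path_max.
Qed.

Lemma path_sub : path_set R w \subset setX R (~: R).
Proof.
apply/subsetP => x /in_path [k _ ->]; by rewrite !inE ptv1_in /= -in_setC inE ptv2_notin.
Qed.

Lemma path_facetR : facetR K R (path_set R w).
Proof.
split; first by split; [exact: (path_facet).1 | exact: path_sub].
by move=> G [fG _] sG; apply: path_max => //; apply/(faceP K).
Qed.

Lemma path_R_unique (R' : {set 'I_n}) : path_set R w \subset setX R' (~: R') -> R' = R.
Proof.
move/subsetP => sub; apply/setP => i; apply/idP/idP => iR.
  apply: contraT => iR'; have [k kw E] := cover_col iR'.
  by move: (sub _ (ptv_in kw)); rewrite !inE E iR andbF.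
have [k kw E] := cover_row iR.
by move: (sub _ (ptv_in kw)); rewrite !inE E => /andP[].
Qed.

Lemma Hc_pred k : 0 < k -> k <= size w -> Hc w k = Hc w k.-1 + ~~ nth false w k.-1.
Proof. by move=> k0 kw; rewrite -Hc_S ?prednK //; lia. Qed.
Lemma Uc_pred k : 0 < k -> k <= size w -> Uc w k = Uc w k.-1 + nth false w k.-1.
Proof. by move=> k0 kw; rewrite -Uc_S ?prednK //; lia. Qed.

Lemma only_colE k : k <= size w -> only_in_col (path_set R w) (ptv w k) =
  ((0 < k) ==> ~~ nth false w k.-1) && ((k < size w) ==> ~~ nth false w k).
Proof.
move=> kw; apply/forall_inP/andP => [H|[h1 h2] y].
  split; apply/implyP => hk; apply/negP => wk.
    have km : k.-1 <= size w by lia.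
    have := H _ (ptv_in km); rewrite ptv2_eqE (Hc_pred hk kw) wk addn0 eqxx /=.
    by move/eqP/ptv_inj => /(_ km kw); lia.
  have km : k.+1 <= size w by lia.
  have := H _ (ptv_in km); rewrite ptv2_eqE (Hc_S hk) wk addn0 eqxx /=.
  by move/eqP/ptv_inj => /(_ km kw); lia.
move/in_path => [k' k'w ->]; apply/implyP; rewrite ptv2_eqE => /eqP E.
apply/eqP; congr ptv; case: (ltngtP k' k) => // h.
  have hk : 0 < k by lia.
  move: (implyP h1 hk) => /negbTE wk.
  have := Hc_mono w (_ : k' <= k.-1); rewrite E (Hc_pred hk kw) wk /= => /(_ ltac:(lia)).
  lia.
have hk : k < size w by lia.
move: (implyP h2 hk) => /negbTE wk.
have := Hc_mono w (_ : k.+1 <= k'); rewrite (Hc_S hk) wk /= E => /(_ h).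
lia.
Qed.

Lemma only_rowE k : k <= size w -> only_in_row (path_set R w) (ptv w k) =
  ((0 < k) ==> nth false w k.-1) && ((k < size w) ==> nth false w k).
Proof.
move=> kw; apply/forall_inP/andP => [H|[h1 h2] y].
  split; apply/implyP => hk; apply/negPn/negP => wk; move/negbTE: wk => wk.
    have km : k.-1 <= size w by lia.
    have := H _ (ptv_in km); rewrite ptv1_eqE (Uc_pred hk kw) wk addn0 eqxx /=.
    by move/eqP/ptv_inj => /(_ km kw); lia.
  have km : k.+1 <= size w by lia.
  have := H _ (ptv_in km); rewrite ptv1_eqE (Uc_S hk) wk addn0 eqxx /=.
  by move/eqP/ptv_inj => /(_ km kw); lia.
move/in_path => [k' k'w ->]; apply/implyP; rewrite ptv1_eqE => /eqP E.
apply/eqP; congr ptv; case: (ltngtP k' k) => // h.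
  have hk : 0 < k by lia.
  move: (implyP h1 hk) => wk.
  have := Uc_mono w (_ : k' <= k.-1); rewrite E (Uc_pred hk kw) wk /= => /(_ ltac:(lia)).
  lia.
have hk : k < size w by lia.
move: (implyP h2 hk) => wk.
have := Uc_mono w (_ : k.+1 <= k'); rewrite (Uc_S hk) wk /= E => /(_ h).
lia.
Qed.

Lemma FminusE k : k <= size w -> (ptv w k \in Fminus R w) = minus_cond R w k (ptv w k).
Proof.
move=> kw; rewrite /Fminus inE ptv_in // andTb; apply/existsP/idP => [[k' /andP[/eqP E mc]]|mc].
  rewrite pt_ptv in E; have {}E := vert_eq E.
  by have kk := ptv_inj (ltnSE (ltn_ord k')) kw E; rewrite kk in mc.
have kw' : k < (size w).+1 by [].
by exists (Ordinal kw'); rewrite /= pt_ptv eqxx mc.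
Qed.

Lemma FplusE k : k <= size w -> (ptv w k \in Fplus R w) = ~~ minus_cond R w k (ptv w k).
Proof. by move=> kw; rewrite /Fplus inE FminusE // ptv_in // andbT. Qed.

End Word.

Lemma maxR_in : rowO p.-1 \in R.
Proof. by apply: nthS_in; have := p_gt0; lia. Qed.

Lemma maxR_E : maxR R = val (rowO p.-1).
Proof.
apply/eqP; rewrite eqn_leq; apply/andP; split.
  apply/bigmax_leqP => i iR; have [a ap ->] := nthS_index iR.
  case: (ltngtP a p.-1) => h; first by apply: ltnW; apply: nthS_lt => //; have := p_gt0; lia.
    lia.
  by rewrite h.
by apply: (@leq_bigmax_cond _ _ (fun i : 'I_n => val i)); apply: maxR_in.
Qed.

Lemma le_maxR r : r \in R -> val r <= maxR R.
Proof. by move=> rR; rewrite /maxR; apply: (@leq_bigmax_cond _ _ (fun i : 'I_n => val i)). Qed.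

Lemma col_ne_maxR c : c \notin R -> val c != maxR R.
Proof.
move=> cR; rewrite maxR_E; apply/negP => /eqP /val_inj E.
by move: maxR_in; rewrite -E (negbTE cR).
Qed.

Lemma rowmaxE w (vw : valid_word R w) k : (val (ptv w k).1 == maxR R) = (Uc w k == 0).
Proof.
rewrite maxR_E; apply/eqP/eqP => [/val_inj E|E].
  have pp : p.-1 < p by have := p_gt0; clia.
  have := nthS_inj (row_idx_lt vw k) pp E.
  have := Uc_le vw k; clia.
by rewrite /ptv /= E subn0.
Qed.

Lemma row_lt_maxE w (vw : valid_word R w) k : (val (ptv w k).1 < maxR R) = (0 < Uc w k).
Proof.
rewrite maxR_E /ptv /= /rowO nthS_ltE; first by have := Uc_le vw k; have := p_gt0; move=> *; apply/idP/idP; clia.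
  exact: row_idx_lt.
have := p_gt0; clia.
Qed.


Lemma cov_minus_col w (vw : valid_word R w) c : c \notin R -> val c < maxR R ->
  exists2 k, k <= size w & ((ptv w k).2 = c) /\ (ptv w k \in Fminus R w).
Proof.
move=> cR cmax.
have ex : exists k, (k <= size w) && ((ptv w k).2 == c).
  by have [k kw E] := cover_col vw cR; exists k; rewrite kw E eqxx.
case: (ex_minnP ex) => k0 /andP[k0w /eqP E0] kmin.
have E1 : (0 < k0) ==> ~~ nth false w k0.-1.
  apply/implyP => h; apply/negP => wk.
  have : (k0.-1 <= size w) && ((ptv w k0.-1).2 == c).
    rewrite -E0 (ptv2_eqE vw) (Hc_pred h k0w) wk addn0 eqxx andbT; lia.
  by move/kmin; lia.
have E2 : (0 < k0) || (Uc w k0 == 0).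
  by case: (posnP k0) => [->|//]; rewrite Uc0 eqxx orbT.
exists k0 => //; split => //.
rewrite (FminusE vw) // /minus_cond; cbv zeta beta.
rewrite (only_colE vw) // (only_rowE vw) // (rowmaxE vw)  E0 cmax /leftturn /rightturn.
move: E1 E2; case: (0 < k0); case: (k0 < size w); case: (nth false w k0.-1);
  case: (nth false w k0); case: (Uc w k0 == 0) => //=.
Qed.

Lemma p2_of w (vw : valid_word R w) : (exists2 r, r \in R & val r < maxR R) -> 0 < p.-1.
Proof.
case=> r rR; have [a ap ->] := nthS_index rR; rewrite maxR_E /rowO nthS_ltE //.
  by move=> h; move: ap h; move: (#|R|) => P; lia.
by have := p_gt0; move: (#|R|) => P; lia.
Qed.

Lemma cov_minus_rowmax w (vw : valid_word R w) : (exists2 r, r \in R & val r < maxR R) ->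
  exists2 k, k <= size w & (val (ptv w k).1 = maxR R) /\ (ptv w k \in Fminus R w).
Proof.
move=> hr; have p2 := p2_of vw hr.
have ex : exists k, (k <= size w) && (Uc w k == 0) by exists 0; rewrite Uc0 eqxx.
have ub : forall k, (k <= size w) && (Uc w k == 0) -> k <= size w.
  by move=> k /andP[].
case: (ex_maxnP ex ub) => k1 /andP[k1w /eqP U1] kmax.
have k1lt : k1 < size w.
  rewrite ltn_neqAle k1w andbT; apply/eqP => E; move: U1; rewrite E Uc_end //.
  by move: p2; move: (#|R|) => P; lia.
have E3 : nth false w k1.
  apply: contraT => /negbTE wk.
  have : (k1.+1 <= size w) && (Uc w k1.+1 == 0) by rewrite k1lt Uc_S // U1 wk.
  by move/kmax; rewrite ltnn.
have E1 : (0 < k1) ==> ~~ nth false w k1.-1.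
  apply/implyP => h; move: U1; rewrite (Uc_pred h k1w); case: nth => //; lia.
exists k1 => //; split; first by apply/eqP; rewrite (rowmaxE vw)  U1.
rewrite (FminusE vw) // /minus_cond; cbv zeta beta.
rewrite (only_colE vw) // (only_rowE vw) // (rowmaxE vw)  U1 eqxx /leftturn /rightturn k1lt E3.
move: E1; case: (0 < k1); case: (nth false w k1.-1) => //=.
Qed.

Lemma cov_plus_row w (vw : valid_word R w) r : r \in R -> val r < maxR R ->
  exists2 k, k <= size w & ((ptv w k).1 = r) /\ (ptv w k \in Fplus R w).
Proof.
move=> rR rmax.
have ex : exists k, (k <= size w) && ((ptv w k).1 == r).
  by have [k kw E] := cover_row vw rR; exists k; rewrite kw E eqxx.
case: (ex_minnP ex) => k0 /andP[k0w /eqP E0] kmin.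
have U0 : 0 < Uc w k0 by rewrite -(row_lt_maxE vw) E0.
have k0p : 0 < k0 by case: (posnP k0) U0 => [->|//]; rewrite Uc0.
have E2 : nth false w k0.-1.
  apply: contraT => /negbTE wk.
  have : (k0.-1 <= size w) && ((ptv w k0.-1).1 == r).
    rewrite -E0 (ptv1_eqE vw) (Uc_pred k0p k0w) wk addn0 eqxx andbT; lia.
  by move/kmin; lia.
exists k0 => //; split => //.
rewrite (FplusE vw) // /minus_cond; cbv zeta beta.
rewrite (only_colE vw) // (only_rowE vw) // (rowmaxE vw)  /leftturn /rightturn k0p E2.
have -> : (Uc w k0 == 0) = false by apply/negbTE; rewrite -lt0n.
by rewrite /= !andbF.
Qed.

Lemma cov_plus_col w (vw : valid_word R w) c : c \notin R -> maxR R < val c ->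
  exists2 k, k <= size w & ((ptv w k).2 = c) /\ (ptv w k \in Fplus R w).
Proof.
move=> cR cmax.
have ex : exists k, (k <= size w) && ((ptv w k).2 == c).
  by have [k kw E] := cover_col vw cR; exists k; rewrite kw E eqxx.
have ub : forall k, (k <= size w) && ((ptv w k).2 == c) -> k <= size w.
  by move=> k /andP[].
case: (ex_maxnP ex ub) => k1 /andP[k1w /eqP E0] kmax.
have F1 : (k1 < size w) ==> ~~ nth false w k1.
  apply/implyP => h; apply/negP => wk.
  have : (k1.+1 <= size w) && ((ptv w k1.+1).2 == c).
    by rewrite -E0 (ptv2_eqE vw) (Hc_S h) wk addn0 eqxx andbT.
  by move/kmax; rewrite ltnn.
have F2 : (0 < k1) ==> (nth false w k1.-1 ==> (Uc w k1 != 0)).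
  apply/implyP => h; apply/implyP => wk; rewrite (Uc_pred h k1w) wk; lia.
have F3 : (val (ptv w k1).2 < maxR R) = false.
  by rewrite E0; apply/negbTE; rewrite -leqNgt ltnW.
exists k1 => //; split => //.
rewrite (FplusE vw) // /minus_cond; cbv zeta beta.
rewrite (only_colE vw) // (only_rowE vw) // (rowmaxE vw)  F3 /leftturn /rightturn.
move: F1 F2; case: (0 < k1); case: (k1 < size w); case: (nth false w k1.-1);
  case: (nth false w k1); case: (Uc w k1 == 0) => //=.
Qed.

Lemma ptv_cross w v (vw : valid_word R w) (vv : valid_word R v) k k' :
  ptv w k = ptv v k' -> Uc w k = Uc v k' /\ Hc w k = Hc v k'.
Proof.
move=> E; have E1 : (ptv w k).1 = (ptv v k').1 by rewrite E.
have E2 : (ptv w k).2 = (ptv v k').2 by rewrite E.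
have := nthS_inj (row_idx_lt vw k) (row_idx_lt vv k') E1.
have := nthS_inj (col_idx_lt vw k) (col_idx_lt vv k') E2.
have := Uc_le vw k; have := Uc_le vv k'; have := p_gt0; move: (#|R|) => P.
move=> *; split; lia.
Qed.

Lemma flatU w j m : j <= m -> m <= size w ->
  (forall i, j <= i -> i < m -> nth false w i = false) -> Uc w m = Uc w j.
Proof.
move=> jm mw H.
have : forall d, j + d <= m -> Uc w (j + d) = Uc w j.
  elim=> [|d IH] h; first by rewrite addn0.
  rewrite addnS Uc_S; last lia.
  by rewrite IH ?H //; lia.
by move/(_ (m - j)); rewrite subnKC //; apply.
Qed.

Lemma flatH w j m : j <= m -> m <= size w ->
  (forall i, j <= i -> i < m -> nth false w i = true) -> Hc w m = Hc w j.
Proof.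
move=> jm mw H.
have : forall d, j + d <= m -> Hc w (j + d) = Hc w j.
  elim=> [|d IH] h; first by rewrite addn0.
  rewrite addnS Hc_S; last lia.
  by rewrite IH ?H //; lia.
by move/(_ (m - j)); rewrite subnKC //; apply.
Qed.

Lemma turnL w v (vw : valid_word R w) (vv : valid_word R v) : lexlt v w ->
  exists2 k, k <= size w & leftturn w k /\ ptv w k \notin path_set R v.
Proof.
case/existsP => -[j jv] /= /andP[/andP[/eqP tk vj] wj].
have sv : size v = size w by rewrite (size_w vv) (size_w vw).
have jw : j < size w by rewrite -sv.
have cU : Uc v j = Uc w j by rewrite /Uc tk.
have cH : Hc v j = Hc w j by rewrite /Hc tk.
have ex : exists m, [&& j <= m, m < size w & nth false w m].
  case: (boolP [exists m : 'I_(size w), (j <= m) && nth false w m]).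
    by case/existsP => m /andP[jm wm]; exists m; rewrite jm ltn_ord wm.
  rewrite negb_exists => /forallP H.
  have fl : Uc w (size w) = Uc w j.
    apply: flatU => //; first exact: ltnW.
    move=> i ji iw; have := H (Ordinal iw); rewrite /= ji /=; by move/negbTE.
  have : Uc v j.+1 <= Uc v (size v) by apply: Uc_mono; rewrite sv.
  rewrite (Uc_end vv) Uc_S // vj -(Uc_end vw) fl cU; lia.
case: (ex_minnP ex) => m /and3P[jm mw wm] mmin.
have jm' : j < m by rewrite ltn_neqAle jm andbT; apply/eqP => E; by move: wj; rewrite E wm.
have flat : forall i, j <= i -> i < m -> nth false w i = false.
  move=> i ji im; apply/negbTE/negP => wi.
  have : [&& j <= i, i < size w & nth false w i] by rewrite ji wi; lia.
  by move/mmin; lia.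
have Um : Uc w m = Uc w j := flatU (ltnW jm') (ltnW mw) flat.
have Hm : Hc w m = Hc w j + (m - j).
  have := UH w m; have := UH w j; rewrite Um; move=> h1 h2.
  rewrite (minn_idPl (ltnW mw)) in h2; rewrite (minn_idPl (ltnW jw)) in h1; lia.
exists m; first exact: ltnW.
split.
  rewrite /leftturn wm mw (_ : 0 < m) /= ?andbT; last lia.
  by rewrite flat //; lia.
apply/negP => /(in_path vv) [k' k'v E].
have [E1 E2] := ptv_cross vw vv E.
case: (leqP k' j) => h.
  have := Hc_mono v h; rewrite cH -E2 Hm; lia.
have := Uc_mono v h; rewrite Uc_S // vj cU -E1 Um; lia.
Qed.

Lemma turnR w v (vw : valid_word R w) (vv : valid_word R v) : lexlt w v ->
  exists2 k, k <= size w & rightturn w k /\ ptv w k \notin path_set R v.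
Proof.
case/existsP => -[j jw] /= /andP[/andP[/eqP tk wj] vj].
have sv : size v = size w by rewrite (size_w vv) (size_w vw).
have cU : Uc v j = Uc w j by rewrite /Uc tk.
have cH : Hc v j = Hc w j by rewrite /Hc tk.
have ex : exists m, [&& j <= m, m < size w & ~~ nth false w m].
  case: (boolP [exists m : 'I_(size w), (j <= m) && ~~ nth false w m]).
    by case/existsP => m /andP[jm wm]; exists m; rewrite jm ltn_ord wm.
  rewrite negb_exists => /forallP H.
  have fl : Hc w (size w) = Hc w j.
    apply: flatH => //; first exact: ltnW.
    move=> i ji iw; have := H (Ordinal iw); rewrite /= ji /=; by move/negPn.
  have : Hc v j.+1 <= Hc v (size v) by apply: Hc_mono; rewrite sv.
  rewrite (Hc_end vv) Hc_S ?sv // vj -(Hc_end vw) fl cH; lia.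
case: (ex_minnP ex) => m /and3P[jm mw wm] mmin.
have jm' : j < m by rewrite ltn_neqAle jm andbT; apply/eqP => E; by move: wm; rewrite -E wj.
have flat : forall i, j <= i -> i < m -> nth false w i = true.
  move=> i ji im; apply/negPn/negP => wi.
  have : [&& j <= i, i < size w & ~~ nth false w i] by rewrite ji wi; lia.
  by move/mmin; lia.
have Hm : Hc w m = Hc w j := flatH (ltnW jm') (ltnW mw) flat.
have Um : Uc w m = Uc w j + (m - j).
  have := UH w m; have := UH w j; rewrite Hm; move=> h1 h2.
  rewrite (minn_idPl (ltnW mw)) in h2; rewrite (minn_idPl (ltnW jw)) in h1; lia.
exists m; first exact: ltnW.
split.
  rewrite /rightturn wm mw (_ : 0 < m) /= ?andbT; last lia.
  by rewrite flat //; lia.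
apply/negP => /(in_path vv) [k' k'v E].
have [E1 E2] := ptv_cross vw vv E.
case: (leqP k' j) => h.
  have := Uc_mono v h; rewrite cU -E1 Um; lia.
have := Hc_mono v h; rewrite Hc_S ?sv // vj cH -E2 Hm; lia.
Qed.

Lemma swap_decomp w k : 0 < k -> k < size w ->
  w = take k.-1 w ++ [:: nth false w k.-1, nth false w k & drop k.+1 w].
Proof.
move=> k0 kw; rewrite -{1}(cat_take_drop k.-1 w); congr (_ ++ _).
rewrite (drop_nth false); last lia.
by rewrite prednK // (drop_nth false).
Qed.

Definition swapw w k b := take k.-1 w ++ [:: b, ~~ b & drop k.+1 w].

Lemma swap_count (a : pred bool) w k b : 0 < k -> k < size w ->
  nth false w k.-1 = ~~ b -> nth false w k = b ->
  forall k', k' != k -> count a (take k' (swapw w k b)) = count a (take k' w).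
Proof.
move=> k0 kw e1 e2 k' nk.
rewrite {2}(swap_decomp k0 kw) e1 e2 /swapw.
have s1 : size (take k.-1 w) = k.-1 by rewrite size_take (_ : k.-1 < size w) //; lia.
rewrite !take_cat s1; case: ltnP => // h; rewrite !count_cat; congr addn.
case E: (k' - k.-1) => [|[|d]] //=; first lia.
by rewrite addnCA.
Qed.

Lemma swap_size w k b : 0 < k -> k < size w -> size (swapw w k b) = size w.
Proof. by move=> k0 kw; rewrite {2}(swap_decomp k0 kw) /swapw !size_cat. Qed.

Lemma swap_count_all (a : pred bool) w k b : 0 < k -> k < size w ->
  nth false w k.-1 = ~~ b -> nth false w k = b -> count a (swapw w k b) = count a w.
Proof.
move=> k0 kw e1 e2.
rewrite -{1}(take_oversize (_ : size (swapw w k b) <= size w)); last by rewrite swap_size.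
by rewrite swap_count // ?take_size // neq_ltn kw orbT.
Qed.

Section Swap.
Variables (w : seq bool) (k : nat) (b : bool).
Hypotheses (k0 : 0 < k) (kw : k < size w)
  (e1 : nth false w k.-1 = ~~ b) (e2 : nth false w k = b).

Lemma swap_valid (vw : valid_word R w) : valid_word R (swapw w k b).
Proof.
by move: vw; rewrite /valid_word swap_size // swap_count_all.
Qed.

Lemma swap_ptv k' : k' != k -> ptv (swapw w k b) k' = ptv w k'.
Proof. by move=> nk; rewrite /ptv /Uc /Hc !swap_count. Qed.

Lemma swap_take : take k.-1 (swapw w k b) = take k.-1 w.
Proof.
have s1 : size (take k.-1 w) = k.-1 by rewrite size_take (_ : k.-1 < size w) //; lia.
by rewrite /swapw take_cat s1 ltnn subnn take0 cats0.
Qed.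

Lemma swap_nth : nth false (swapw w k b) k.-1 = b.
Proof.
have s1 : size (take k.-1 w) = k.-1 by rewrite size_take (_ : k.-1 < size w) //; lia.
by rewrite /swapw nth_cat s1 ltnn subnn.
Qed.

Lemma swap_sub (vw : valid_word R w) : path_set R w :\ ptv w k \subset path_set R (swapw w k b).
Proof.
apply/subsetP => y; rewrite in_setD1 => /andP[ny /(in_path vw) [k' k'w ey]].
apply/(in_path (swap_valid vw)); exists k'; first by rewrite swap_size.
rewrite swap_ptv // ; apply: contraNneq ny => E; by rewrite ey E.
Qed.

End Swap.

Lemma lexlt_swapT w k : 0 < k -> k < size w -> nth false w k.-1 = false ->
  nth false w k = true -> lexlt (swapw w k true) w.
Proof.
move=> k0 kw e1 e2; apply/existsP.
have kk : k.-1 < size (swapw w k true) by rewrite swap_size //; lia.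
exists (Ordinal kk); rewrite /= swap_take // swap_nth // e1 eqxx.
by [].
Qed.

Lemma lexlt_swapF w k : 0 < k -> k < size w -> nth false w k.-1 = true ->
  nth false w k = false -> lexlt w (swapw w k false).
Proof.
move=> k0 kw e1 e2; apply/existsP.
have kk : k.-1 < size w by lia.
exists (Ordinal kk); rewrite /= swap_take // swap_nth // e1 eqxx.
by [].
Qed.

Lemma lexlt_total (s1 s2 : seq bool) : size s1 = size s2 -> s1 != s2 ->
  lexlt s1 s2 || lexlt s2 s1.
Proof.
move=> ss ne.
have ex : exists j, (j < size s1) && (nth false s1 j != nth false s2 j).
  case: (boolP [exists j : 'I_(size s1), nth false s1 j != nth false s2 j]).
    by case/existsP => j hj; exists j; rewrite ltn_ord hj.
  rewrite negb_exists => /forallP H; exfalso; move/eqP: ne; apply.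
  apply: (@eq_from_nth bool false s1 s2 ss) => i hi.
  by move: (H (Ordinal hi)); rewrite negbK => /eqP.
case: (ex_minnP ex) => j /andP[js hj] jmin.
have tk : take j s1 = take j s2.
  apply: (@eq_from_nth bool false); first by rewrite !size_take -ss.
  move=> i; rewrite size_take js => ij; rewrite !nth_take //.
  apply/eqP; apply: contraT => hi.
  have : (i < size s1) && (nth false s1 i != nth false s2 i) by rewrite hi andbT; lia.
  by move/jmin; lia.
case E1: (nth false s1 j); move: hj; rewrite E1 => hj.
  apply/orP; left; apply/existsP; exists (Ordinal js); rewrite /= tk eqxx E1 /=.
  by move: hj; case: nth.
apply/orP; right; have js2 : j < size s2 by rewrite -ss.
apply/existsP; exists (Ordinal js2); rewrite /= tk eqxx E1 /= andbT.
by move: hj; case: nth.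
Qed.

Lemma path_inj w1 w2 (v1 : valid_word R w1) (v2 : valid_word R w2) :
  path_set R w1 = path_set R w2 -> w1 = w2.
Proof.
move=> E; apply/eqP; apply: contraT => ne.
have ss : size w1 = size w2 by rewrite (size_w v1) (size_w v2).
case/orP: (lexlt_total ss ne) => lx.
  have [k kw [_ nin]] := turnL v2 v1 lx.
  by move: nin; rewrite E ptv_in.
have [k kw [_ nin]] := turnL v1 v2 lx.
by move: nin; rewrite -E ptv_in.
Qed.

Lemma Rof_facetR R' w (vw : valid_word R w) : facetR K R' (path_set R w) -> R' = R.
Proof. by case=> -[_ sub] _; apply: (path_R_unique vw). Qed.

Lemma rt_not_minus w k x : rightturn w k -> ~~ minus_cond R w k x.
Proof.
rewrite /minus_cond /leftturn /rightturn; cbv zeta beta.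
by case: (0 < k); case: (k < size w); case: (nth false w k.-1); case: (nth false w k).
Qed.

Lemma minus_block w (vw : valid_word R w) G : facet K G ->
  facet_lt K G (path_set R w) -> ~ (Fminus R w \subset G).
Proof.
move=> fG [S1 [R1 [pS1 pR1 fS1 fR1 hor]]]; have eR1 := Rof_facetR vw fR1; subst R1.
move/subsetP => sub.
have /subsetP GS := fS1.1.2.
have inS1 y : y \in Fminus R w -> (y.1 \in S1) && (y.2 \notin S1).
  by move=> yF; move: (GS _ (sub _ yF)); rewrite !inE.
case: hor => [lt|[eS [v [w' [vv vw' Gv Fw' lx]]]]].
  case/setlt_char: lt => m [agr [[mS [mR [j /andP[mj jR]]]]|[mR [mS big]]]].
    have cm : val m < maxR R by apply: leq_trans mj (le_maxR jR).
    have [k kw [E kF]] := cov_minus_col vw mR cm.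
    by move: (inS1 _ kF); rewrite E mS andbF.
  case/andP: pS1 => /set0Pn [s sS] _.
  have sm : s < m.
    case: (ltngtP s m) => // h; first by move: (big _ h); rewrite sS.
    by move: mS; rewrite -(val_inj h) sS.
  case: (boolP (s \in R)) => sR.
    have hr : exists2 r, r \in R & val r < maxR R by exists s => //; apply: leq_trans sm (le_maxR mR).
    have [k kw [E kF]] := cov_minus_rowmax vw hr.
    have := inS1 _ kF; case/andP => k1 _.
    case: (ltngtP m (ptv w k).1) => h.
    - by move: (big _ h); rewrite k1.
    - by move: (le_maxR mR); rewrite -E leqNgt h.
    - by move: mS; rewrite (val_inj h) k1.
  have [k kw [E kF]] := cov_minus_col vw sR (leq_trans sm (le_maxR mR)).
  by move: (inS1 _ kF); rewrite E sS andbF.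
subst S1; have ew := path_inj vw' vw Fw'; subst w'.
have [k kw [lt nin]] := turnL vw vv lx.
have kF : ptv w k \in Fminus R w by rewrite (FminusE vw) // /minus_cond lt.
by move: nin; rewrite Gv sub.
Qed.

Lemma plus_block w (vw : valid_word R w) G : facet K G ->
  facet_lt K (path_set R w) G -> ~ (Fplus R w \subset G).
Proof.
move=> fG [R1 [S1 [pR1 pS1 fR1 fS1 hor]]]; have eR1 := Rof_facetR vw fR1; subst R1.
move/subsetP => sub.
have /subsetP GS := fS1.1.2.
have inS1 y : y \in Fplus R w -> (y.1 \in S1) && (y.2 \notin S1).
  by move=> yF; move: (GS _ (sub _ yF)); rewrite !inE.
case: hor => [lt|[eS [w' [v [vw' vv Fw' Gv lx]]]]].
  case/setlt_char: lt => m [agr [[mR [mS [j /andP[mj jS]]]]|[mS [mR big]]]].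
    case: (ltnP m (maxR R)) => cm.
      have [k kw [E kF]] := cov_plus_row vw mR cm.
      by move: (inS1 _ kF); rewrite E (negbTE mS).
    have jR : j \notin R.
      apply/negP => jR; move: (le_maxR jR); rewrite leqNgt; apply/negP/negPn.
      exact: leq_ltn_trans cm mj.
    have [k kw [E kF]] := cov_plus_col vw jR (leq_ltn_trans cm mj).
    by move: (inS1 _ kF); rewrite E jS andbF.
  have cm : maxR R < val m.
    rewrite maxR_E; case: (ltngtP (rowO #|R|.-1) m) => // h.
      by move: (big _ h); rewrite maxR_in.
    by move: mR; rewrite -(val_inj h) maxR_in.
  have [k kw [E kF]] := cov_plus_col vw mR cm.
  by move: (inS1 _ kF); rewrite E mS andbF.
subst S1; have ew := path_inj vw' vw Fw'; subst w'.
have [k kw [rt nin]] := turnR vw vv lx.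
have kF : ptv w k \in Fplus R w by rewrite (FplusE vw) // rt_not_minus.
by move: nin; rewrite Gv sub.
Qed.

Lemma single_point w (vw : valid_word R w) k : k <= size w ->
  only_in_col (path_set R w) (ptv w k) -> only_in_row (path_set R w) (ptv w k) ->
  path_set R w :\ ptv w k = set0.
Proof.
move=> kw; rewrite (only_colE vw) // (only_rowE vw) //.
case: (posnP k) => [k0|kp]; last first.
  by move=> /andP[na _] /andP[a _]; move: na a; case: nth.
subst k; case: (posnP (size w)) => [s0|sp]; last first.
  by move=> /andP[_ na] /andP[_ a]; move: na a; case: nth.
move=> _ _; apply/setP => y; rewrite in_setD1 in_set0; apply/negP => /andP[ny].
move/(in_path vw) => [k' k'w ey].
have k0 : k' = 0 by lia.
by move: ny; rewrite ey k0 eqxx.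
Qed.

Lemma pair_ptv w k : ((ptv w k).1, (ptv w k).2) = ptv w k.
Proof. by []. Qed.

Lemma constr_col w (vw : valid_word R w) k : k <= size w ->
  only_in_col (path_set R w) (ptv w k) -> path_set R w :\ ptv w k != set0 ->
  exists G, [/\ facet K G, path_set R w :\ ptv w k \subset G, properR (rowsof G),
     facetR K (rowsof G) G & rowsof G = (ptv w k).2 |: R].
Proof.
move=> kw oc ne.
have orw : ~~ only_in_row (path_set R w) (ptv w k).
  by apply: contra ne => orw; rewrite (single_point vw kw oc orw).
have [z0 z0F] := set0Pn _ ne.
have fFc : facep (path_set R w :\ ptv w k) := facep_sub (path_facep vw) (subD1set _ _).
have h1 : forall z, z \in path_set R w :\ ptv w k -> z.1 != (ptv w k).2.
  move=> z; rewrite in_setD1 => /andP[_ /(in_path vw) [k' _ ->]]; apply/eqP => E.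
  by move: (ptv2_notin vw k); rewrite -E (ptv1_in vw).
have h2 : forall z, z \in path_set R w :\ ptv w k -> z.2 != (ptv w k).2.
  move=> z; rewrite in_setD1 => /andP[nz zF]; apply/negP => E.
  by move/forall_inP: oc => /(_ z zF); rewrite E /= (negbTE nz).
have [d fd] := ext_row fFc z0F h1 h2.
have [G [fG HG]] := ex_facet K fd.
have xin : ((ptv w k).2, d) \in G by apply: (subsetP HG); rewrite setU11.
have [pG fRG] := facet_rows fG xin.
exists G; split => //; first by apply: subset_trans HG; apply: subsetUr.
apply: (@rows_determined _ (((ptv w k).2, d) |: (path_set R w :\ ptv w k))) => //.
- by case: ((facetP K G).1 fG).
- move=> i; rewrite in_setU1 => /predU1P[->|iR]; first by exists d; rewrite setU11.
  have [k' k'w E] := cover_row vw iR.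
  case: (eqVneq (ptv w k') (ptv w k)) => [ex|nx].
    move: orw; rewrite negb_forall_in => /exists_inP [y yF]; rewrite negb_imply.
    case/andP => /eqP y1 ny; exists y.2; apply/setU1P; right.
    by rewrite -E ex -y1 -surjective_pairing in_setD1 ny yF.
  exists (ptv w k').2; apply/setU1P; right.
  by rewrite -E pair_ptv in_setD1 nx ptv_in.
- move=> i; rewrite in_setU1 negb_or => /andP[ix iR].
  have [k' k'w E] := cover_col vw iR.
  exists (ptv w k').1; apply/setU1P; right.
  rewrite -E pair_ptv in_setD1 ptv_in // andbT.
  by apply/negP => /eqP ex; move: ix; rewrite -E ex eqxx.
Qed.

Lemma constr_row w (vw : valid_word R w) k : k <= size w ->
  only_in_row (path_set R w) (ptv w k) -> ~~ only_in_col (path_set R w) (ptv w k) ->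
  exists G, [/\ facet K G, path_set R w :\ ptv w k \subset G, properR (rowsof G),
     facetR K (rowsof G) G & rowsof G = R :\ (ptv w k).1].
Proof.
move=> kw orw noc.
have [y yF /andP[/eqP y2 ny]] : exists2 y, y \in path_set R w &
    (y.2 == (ptv w k).2) && (y != ptv w k).
  by move: noc; rewrite negb_forall_in => /exists_inP [y yF]; rewrite negb_imply => h; exists y.
have yFc : y \in path_set R w :\ ptv w k by rewrite in_setD1 ny.
have fFc : facep (path_set R w :\ ptv w k) := facep_sub (path_facep vw) (subD1set _ _).
have h1 : forall z, z \in path_set R w :\ ptv w k -> z.1 != (ptv w k).1.
  move=> z; rewrite in_setD1 => /andP[nz zF]; apply/negP => E.
  by move/forall_inP: orw => /(_ z zF); rewrite E /= (negbTE nz).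
have h2 : forall z, z \in path_set R w :\ ptv w k -> z.2 != (ptv w k).1.
  move=> z; rewrite in_setD1 => /andP[_ /(in_path vw) [k' _ ->]]; apply/eqP => E.
  by move: (ptv2_notin vw k'); rewrite E (ptv1_in vw).
have [d fd] := ext_col fFc yFc h1 h2.
have [G [fG HG]] := ex_facet K fd.
have xin : (d, (ptv w k).1) \in G by apply: (subsetP HG); rewrite setU11.
have [pG fRG] := facet_rows fG xin.
exists G; split => //; first by apply: subset_trans HG; apply: subsetUr.
apply: (@rows_determined _ ((d, (ptv w k).1) |: (path_set R w :\ ptv w k))) => //.
- by case: ((facetP K G).1 fG).
- move=> i; rewrite in_setD1 => /andP[ix iR].
  have [k' k'w E] := cover_row vw iR.
  exists (ptv w k').2; apply/setU1P; right.
  rewrite -E pair_ptv in_setD1 ptv_in // andbT.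
  by apply/negP => /eqP ex; move: ix; rewrite -E ex eqxx.
- move=> i; rewrite in_setD1 negb_and negbK => /orP[/eqP ->|iR].
    by exists d; rewrite setU11.
  have [k' k'w E] := cover_col vw iR.
  case: (eqVneq (ptv w k') (ptv w k)) => [ex|nx].
    exists y.1; apply/setU1P; right.
    by rewrite -E ex -y2 -surjective_pairing.
  exists (ptv w k').1; apply/setU1P; right.
  by rewrite -E pair_ptv in_setD1 nx ptv_in.
Qed.

Lemma noturn_oc_or w (vw : valid_word R w) k : k <= size w -> ~~ leftturn w k ->
  ~~ rightturn w k ->
  only_in_col (path_set R w) (ptv w k) || only_in_row (path_set R w) (ptv w k).
Proof.
move=> kw; rewrite (only_colE vw) // (only_rowE vw) // /leftturn /rightturn.
by case: (0 < k); case: (k < size w); case: (nth false w k.-1); case: (nth false w k).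
Qed.

Lemma Fminus_sub w : Fminus R w \subset path_set R w.
Proof. by apply/subsetP => x; rewrite /Fminus inE => /andP[]. Qed.
Lemma Fplus_sub w : Fplus R w \subset path_set R w.
Proof. by apply/subsetP => x; rewrite /Fplus inE => /andP[]. Qed.

Lemma part1 w (vw : valid_word R w) :
  (exists G, facet K G /\ facet_lt K G (path_set R w)) ->
  forall A : {set vertex},
    (gen_cx (fun G => G = path_set R w) A /\
     gen_cx (fun G => facet K G /\ facet_lt K G (path_set R w)) A)
    <-> gen_cx (fun G => exists2 x, x \in Fminus R w & G = path_set R w :\ x) A.
Proof.
move=> [G0 [fG0 lt0]] A; split.
  case=> -[G1 -> AF] [G2 [fG2 lt2] AG2].
  have /subsetPn [x xFm xG2] : ~~ (Fminus R w \subset G2).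
    by apply/negP; apply: (minus_block vw fG2 lt2).
  exists (path_set R w :\ x); first by exists x.
  apply/subsetP => a aA; rewrite in_setD1 (subsetP AF _ aA) andbT.
  by apply: contraNneq xG2 => <-; exact: (subsetP AG2).
case=> G [x xFm ->] AFx; split.
  by exists (path_set R w) => //; apply: subset_trans AFx (subD1set _ _).
case: (eqVneq (path_set R w :\ x) set0) => [E0|ne].
  by exists G0 => //; apply: subset_trans AFx _; rewrite E0 sub0set.
have [k kw ex] := (in_path vw x).1 (subsetP (Fminus_sub w) _ xFm).
subst x; move: xFm; rewrite (FminusE vw kw) /minus_cond; cbv zeta beta.
case/or3P => [lt|/andP[/andP[nt oc] cm]|/andP[/andP[/andP[nt noc] orw] rm]].
- move: (lt) => /and4P[k0 ks a b].
  have e1 : nth false w k.-1 = ~~ true by apply/negbTE.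
  have e2 : nth false w k = true by [].
  have vw' := swap_valid k0 ks e1 e2 vw.
  exists (path_set R (swapw w k true)); last first.
    by apply: subset_trans AFx (swap_sub k0 ks e1 e2 vw).
  split; first exact: path_facet vw'.
  exists R, R; split => //; [exact: path_facetR vw' | exact: path_facetR vw |].
  right; split => //; exists (swapw w k true), w; split => //.
  by apply: lexlt_swapT => //; apply/negbTE.
- have [G1 [fG sub pG fRG rG]] := constr_col vw kw oc ne.
  exists G1; last by apply: subset_trans AFx sub.
  split => //; exists (rowsof G1), R; split => //; first exact: path_facetR vw.
  left; rewrite rG; apply/setlt_char; exists (ptv w k).2; split.
    move=> j jx; have : j != (ptv w k).2 by apply: contraTneq jx => ->; rewrite ltnn.
    by rewrite in_setU1 => /negbTE ->.
  left; split; first by rewrite setU11.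
  split; first exact: ptv2_notin vw k.
  by exists (rowO #|R|.-1); rewrite maxR_in andbT -maxR_E.
- have [G1 [fG sub pG fRG rG]] := constr_row vw kw orw noc.
  exists G1; last by apply: subset_trans AFx sub.
  split => //; exists (rowsof G1), R; split => //; first exact: path_facetR vw.
  left; rewrite rG; apply/setlt_char; exists (ptv w k).1; split.
    move=> j jx; have : j != (ptv w k).1 by apply: contraTneq jx => ->; rewrite ltnn.
    by rewrite in_setD1 => /negbTE ->.
  right; split; first exact: ptv1_in vw k.
  split; first by rewrite setD11.
  move=> j xj; rewrite in_setD1; apply/negP => /andP[_ jR].
  by move: (le_maxR jR); rewrite -(eqP rm) leqNgt xj.
Qed.

Lemma part2 w (vw : valid_word R w) :
  (exists G, facet K G /\ facet_lt K (path_set R w) G) ->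
  forall A : {set vertex},
    (gen_cx (fun G => G = path_set R w) A /\
     gen_cx (fun G => facet K G /\ facet_lt K (path_set R w) G) A)
    <-> gen_cx (fun G => exists2 x, x \in Fplus R w & G = path_set R w :\ x) A.
Proof.
move=> [G0 [fG0 lt0]] A; split.
  case=> -[G1 -> AF] [G2 [fG2 lt2] AG2].
  have /subsetPn [x xFm xG2] : ~~ (Fplus R w \subset G2).
    by apply/negP; apply: (plus_block vw fG2 lt2).
  exists (path_set R w :\ x); first by exists x.
  apply/subsetP => a aA; rewrite in_setD1 (subsetP AF _ aA) andbT.
  by apply: contraNneq xG2 => <-; exact: (subsetP AG2).
case=> G [x xFm ->] AFx; split.
  by exists (path_set R w) => //; apply: subset_trans AFx (subD1set _ _).
case: (eqVneq (path_set R w :\ x) set0) => [E0|ne].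
  by exists G0 => //; apply: subset_trans AFx _; rewrite E0 sub0set.
have [k kw ex] := (in_path vw x).1 (subsetP (Fplus_sub w) _ xFm).
subst x; move: xFm; rewrite (FplusE vw kw).
case: (boolP (rightturn w k)) => [rt _|nrt].
  move: (rt) => /and4P[k0 ks a b].
  have e1 : nth false w k.-1 = ~~ false by [].
  have e2 : nth false w k = false by apply/negbTE.
  have vw' := swap_valid k0 ks e1 e2 vw.
  exists (path_set R (swapw w k false)); last first.
    by apply: subset_trans AFx (swap_sub k0 ks e1 e2 vw).
  split; first exact: path_facet vw'.
  exists R, R; split => //; [exact: path_facetR vw | exact: path_facetR vw' |].
  right; split => //; exists w, (swapw w k false); split => //.
  by apply: lexlt_swapF => //; apply/negbTE.
rewrite /minus_cond; cbv zeta beta; rewrite !negb_or => /and3P[nlt nb nc].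
have := noturn_oc_or vw kw nlt nrt.
case: (boolP (only_in_col (path_set R w) (ptv w k))) => oc /= orw.
- move: nb; rewrite nlt nrt oc /= => cm.
  have cm' : maxR R < val (ptv w k).2.
    by rewrite ltn_neqAle eq_sym col_ne_maxR ?(ptv2_notin vw) //= leqNgt.
  have [G1 [fG sub pG fRG rG]] := constr_col vw kw oc ne.
  exists G1; last by apply: subset_trans AFx sub.
  split => //; exists R, (rowsof G1); split => //; first exact: path_facetR vw.
  left; rewrite rG; apply/setlt_char; exists (ptv w k).2; split.
    move=> j jx; have : j != (ptv w k).2 by apply: contraTneq jx => ->; rewrite ltnn.
    by rewrite in_setU1 => /negbTE ->.
  right; split; first by rewrite setU11.
  split; first exact: ptv2_notin vw k.
  move=> j xj; apply/negP => jR.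
  by move: (le_maxR jR); rewrite leqNgt (ltn_trans cm' xj).
- move: nc; rewrite nlt nrt oc orw /= => rm.
  have rm' : val (ptv w k).1 < maxR R.
    by rewrite ltn_neqAle rm le_maxR // (ptv1_in vw).
  have [G1 [fG sub pG fRG rG]] := constr_row vw kw orw oc.
  exists G1; last by apply: subset_trans AFx sub.
  split => //; exists R, (rowsof G1); split => //; first exact: path_facetR vw.
  left; rewrite rG; apply/setlt_char; exists (ptv w k).1; split.
    move=> j jx; have : j != (ptv w k).1 by apply: contraTneq jx => ->; rewrite ltnn.
    by rewrite in_setD1 => /negbTE ->.
  left; split; first exact: ptv1_in vw k.
  split; first by rewrite setD11.
  exists (rowO #|R|.-1); rewrite in_setD1 maxR_in andbT -maxR_E rm' /=.
  apply/negP => /eqP E; move: rm'; by rewrite maxR_E E /= ltnn.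
Qed.

End Paths.

Unset Implicit Arguments.
Set Strict Implicit.

Theorem proposition4p7 (K : fieldType) (n : nat) : (2 <= n)%N ->
  (forall F : {set vertex n}, facet K F ->
     (exists G, facet K G /\ facet_lt K G F) ->
     forall (R : {set 'I_n}) (w : seq bool),
       properR R -> valid_word R w -> path_set R w = F ->
       forall A : {set vertex n},
         (gen_cx (fun G => G = F) A /\ gen_cx (fun G => facet K G /\ facet_lt K G F) A)
         <-> gen_cx (fun G => exists2 x, x \in Fminus R w & G = F :\ x) A)
  /\
  (forall F : {set vertex n}, facet K F ->
     (exists G, facet K G /\ facet_lt K F G) ->
     forall (R : {set 'I_n}) (w : seq bool),
       properR R -> valid_word R w -> path_set R w = F ->
       forall A : {set vertex n},
         (gen_cx (fun G => G = F) A /\ gen_cx (fun G => facet K G /\ facet_lt K F G) A)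
         <-> gen_cx (fun G => exists2 x, x \in Fplus R w & G = F :\ x) A).
Proof.
case: n => [|n'] // hn; split.
  move=> F _ hyp R w pR vw eF A; subst F.
  exact: (part1 pR vw hyp A).
move=> F _ hyp R w pR vw eF A; subst F.
exact: (part2 pR vw hyp A).
Qed.
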